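(* Let $Q=S^1\times S^1$ with angular coordinates $(\psi,\varphi)$ on a neighborhood $U$ of $(0,0)$, let $A,B,C,D_1,D_2>0$ be constants with $AC>B^2$, and consider $$\mathfrak H(\psi,\varphi,p_\psi,p_\varphi)=\frac{1}{2m(\psi,\varphi)}\big(Cp_\psi^2-2B\cos(\psi-\varphi)p_\psi p_\varphi+Ap_\varphi^2\big),\quad m=AC-B^2\cos^2(\psi-\varphi),$$ $h(\psi,\varphi)=D_1\cos\psi+D_2\cos\varphi$, and $W=\mathrm{span}\{\mathrm d\varphi\}$. For a constant $\gamma\notin\{-1,A/B\}$ set $x=\psi$, $y=\varphi+\gamma\psi$ and $b:=B\cos((1+\gamma)x-y)$. Then, shrinking $U$ if necessary, $\hat W:=(\mathbb F\mathfrak H)^{-1}(\mathrm{span}\{\partial/\partial x\})$ is a complement of $W$; the projection $\hat{\mathfrak p}$ onto $\hat W$ along $W$ satisfies $\hat{\mathfrak p}(\mathrm dx)=\frac{1}{A-\gamma b}\sigma$, $\hat{\mathfrak p}(\mathrm dy)=\frac{\gamma}{A-\gamma b}\sigma$ with $\sigma:=(\mathbb F\mathfrak H)^{-1}(\partial/\partial x)$; and for every quadratic form $\mathfrak K$ on $\hat W$, writing $\mathfrak K(a\sigma)=\tfrac12K a^2$ with $K>0$, the function $u:=\big(\frac{\partial h}{\partial x}\hat P^1+\frac{\partial h}{\partial y}\hat P^2\big)K$ (where $\hat P^1=\frac{1}{A-\gamma b}$, $\hat P^2=\frac{\gamma}{A-\gamma b}$) equals $u(x,y)=-\frac{D_1\sin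 x}{A-\gamma b}K(x,y)$. Consequently $\frac{\partial u}{\partial y}(0,0)=0$ and $\frac{\partial u}{\partial x}(0,0)=\frac{-D_1K(0,0)}{A-\gamma B}$, which is positive if and only if $\gamma>A/B$; hence, when $\mathfrak K$ solves the kinetic equation, the solution $\hat h(x,y)=\int_0^xu(t,y)\,\mathrm dt+\frac{\varpi}{2}y^2$ of the potential equation has a critical point with positive-definite Hessian at $(0,0)$ if and only if $\gamma>A/B$ and $\varpi>0$.
   Context: A quadratic form on a subbundle $V\subseteq T^*Q$ is $\mathfrak F(\alpha)=\tfrac12\langle\alpha,\rho^\sharp(\alpha)\rangle$ with $\rho$ a smooth positive-definite fibered inner product on $V^*$. $\mathbb F\mathfrak H:T^*Q\to TQ$ is the fiber derivative, $\langle\beta,\mathbb F\mathfrak H(\alpha)\rangle=\frac{d}{dt}\mathfrak H(\alpha+t\beta)|_{t=0}$, a bundle isomorphism. A complement of $W$ is a subbundle $\hat W$ with $T^*Q=\hat W\oplus W$. The kinetic equation for $\mathfrak K$ is $\{\mathfrak K\circ\hat{\mathfrak p},\mathfrak H\}(\sigma)=0$ for all $\sigma\in\hat W$ ($\{\cdot,\cdot\}$ the canonical Poisson bracket), and the potential equation for $\hat h:Q\to\mathbb R$ is $\big(\mathrm d\hat h\circ\mathbb F\mathfrak H-\mathrm dh\circ\mathbb F(\mathfrak K\circ\hat{\mathfrak p})\big)(\sigma)=0$ for all $\sigma\in\hat W$, which in the coordinates $(x,y)$ reads $\partial\hat h/\partial x=u$. Functions are identified with their local representatives in the coordinates $(x,y)$.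 *)

(* Defs.v *)
From Stdlib Require Export Reals Lra ClassicalEpsilon.
Open Scope R_scope.

(* Everything is stated in the chart: base points of Q near (0,0) are given
   by angular coordinates (psi, phi), resp. by (x, y) with
   x = psi, y = phi + gamma psi.
   Covectors at a point are pairs (p_psi, p_phi) = components in the basis
   (d psi, d phi); tangent vectors are pairs (v_psi, v_phi) = components in the
   basis (d/d psi, d/d phi). *)

Definition vec := (R * R)%type.

Definition vadd (a b : vec) : vec := (fst a + fst b, snd a + snd b).
Definition vsub (a b : vec) : vec := (fst a - fst b, snd a - snd b).
Definition vscale (c : R) (a : vec) : vec := (c * fst a, c * snd a).
Definition pairing (alpha v : vec) : R := fst alpha * fst v + snd alpha * snd v.

Definition mass (A B C psi phi : R) : R := A * C - B ^ 2 * (cos (psi - phi)) ^ 2.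

Definition Ham (A B C psi phi ppsi pphi : R) : R :=
  / (2 * mass A B C psi phi) *
  (C * ppsi ^ 2 - 2 * B * cos (psi - phi) * ppsi * pphi + A * pphi ^ 2).

Definition hpot (D1 D2 psi phi : R) : R := D1 * cos psi + D2 * cos phi.

Definition FiberDeriv (A B C psi phi : R) (alpha v : vec) : Prop :=
  forall beta : vec,
    derivable_pt_lim
      (fun t => Ham A B C psi phi (fst alpha + t * fst beta) (snd alpha + t * snd beta))
      0 (pairing beta v).

(* coordinate objects of the chart (x,y) = (psi, phi + gamma psi),
   written in the (psi,phi)-bases *)
Definition dx_cov : vec := (1, 0).            (* dx = d psi *)
Definition dy_cov (gamma : R) : vec := (gamma, 1). (* dy = gamma d psi + d phi *)
Definition ddx_vec (gamma : R) : vec := (1, - gamma). (* d/dx = d/dpsi - gamma d/dphi *)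

Definition InW (beta : vec) : Prop := exists c : R, beta = (0, c).

Definition InWhat (A B C gamma psi phi : R) (beta : vec) : Prop :=
  exists c : R, FiberDeriv A B C psi phi beta (vscale c (ddx_vec gamma)).

Definition IsComplement (A B C gamma psi phi : R) : Prop :=
  (forall alpha : vec, exists beta : vec,
      InWhat A B C gamma psi phi beta /\ InW (vsub alpha beta)) /\
  (forall beta : vec, InWhat A B C gamma psi phi beta -> InW beta -> beta = (0, 0)).

Definition IsProjHat (A B C gamma psi phi : R) (alpha beta : vec) : Prop :=
  InWhat A B C gamma psi phi beta /\ InW (vsub alpha beta).

Definition bfun (B gamma x y : R) : R := B * cos ((1 + gamma) * x - y).
Definition P1 (A B gamma x y : R) : R := / (A - gamma * bfun B gamma x y).
Definition P2 (A B gamma x y : R) : R := gamma / (A - gamma * bfun B gamma x y).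

Definition in_box (e x y : R) : Prop := Rabs x < e /\ Rabs y < e.

(* partial derivatives (value chosen classically; meaningful when they exist) *)
Definition pdx (f : R -> R -> R) (x y : R) : R :=
  epsilon (inhabits 0) (fun l => derivable_pt_lim (fun t => f t y) x l).
Definition pdy (f : R -> R -> R) (x y : R) : R :=
  epsilon (inhabits 0) (fun l => derivable_pt_lim (fun t => f x t) y l).

Definition hxy (D1 D2 gamma x y : R) : R := hpot D1 D2 x (y - gamma * x).

Definition ufun (A B D1 D2 gamma : R) (K : R -> R -> R) (x y : R) : R :=
  (pdx (hxy D1 D2 gamma) x y * P1 A B gamma x y
   + pdy (hxy D1 D2 gamma) x y * P2 A B gamma x y) * K x y.

Definition cont2_at (f : R -> R -> R) (x y : R) : Prop :=
  forall e, 0 < e -> exists d, 0 < d /\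
    forall x' y', Rabs (x' - x) < d -> Rabs (y' - y) < d ->
      Rabs (f x' y' - f x y) < e.

CoInductive SmoothOn (e : R) (f : R -> R -> R) : Prop :=
| smooth_intro (fx fy : R -> R -> R) :
    (forall x y, in_box e x y ->
       cont2_at f x y /\
       derivable_pt_lim (fun t => f t y) x (fx x y) /\
       derivable_pt_lim (fun t => f x t) y (fy x y)) ->
    SmoothOn e fx -> SmoothOn e fy -> SmoothOn e f.

Definition PBzero (F G : R -> R -> R -> R -> R) (q1 q2 p1 p2 : R) : Prop :=
  exists Fq1 Fq2 Fp1 Fp2 Gq1 Gq2 Gp1 Gp2 : R,
    derivable_pt_lim (fun t => F t q2 p1 p2) q1 Fq1 /\
    derivable_pt_lim (fun t => F q1 t p1 p2) q2 Fq2 /\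
    derivable_pt_lim (fun t => F q1 q2 t p2) p1 Fp1 /\
    derivable_pt_lim (fun t => F q1 q2 p1 t) p2 Fp2 /\
    derivable_pt_lim (fun t => G t q2 p1 p2) q1 Gq1 /\
    derivable_pt_lim (fun t => G q1 t p1 p2) q2 Gq2 /\
    derivable_pt_lim (fun t => G q1 q2 t p2) p1 Gp1 /\
    derivable_pt_lim (fun t => G q1 q2 p1 t) p2 Gp2 /\
    Fq1 * Gp1 + Fq2 * Gp2 - Fp1 * Gq1 - Fp2 * Gq2 = 0.

(* Kinetic equation for the quadratic form KK on What with KK(a sigma) = 1/2 K a^2,
   sigma = (FH)^{-1}(d/dx): F below is KK o phat (uniquely determined on the box),
   and {KK o phat, H}(beta) = 0 for all beta in What over the box. *)
Definition KineticEq (A B C gamma e : R) (K : R -> R -> R) : Prop :=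
  exists F : R -> R -> R -> R -> R,
    (forall psi phi ppsi pphi, in_box e psi (phi + gamma * psi) ->
       forall (s : vec) (a : R),
         FiberDeriv A B C psi phi s (ddx_vec gamma) ->
         IsProjHat A B C gamma psi phi (ppsi, pphi) (vscale a s) ->
         F psi phi ppsi pphi = / 2 * K psi (phi + gamma * psi) * a ^ 2) /\
    (forall psi phi, in_box e psi (phi + gamma * psi) ->
       forall beta : vec, InWhat A B C gamma psi phi beta ->
         PBzero F (Ham A B C) psi phi (fst beta) (snd beta)).

(* (x0,y0) is a critical point of f with positive-definite Hessian.
   Hessian entries: f_xx, f_xy := d/dy (df/dx), f_yy (symmetric Hessian). *)
Definition CritPD (f : R -> R -> R) (x0 y0 : R) : Prop :=
  exists (d : R) (fx : R -> R -> R) (fy : R -> R) (hxx hxy hyy : R),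
    0 < d /\
    (forall x y, Rabs (x - x0) < d -> Rabs (y - y0) < d ->
       derivable_pt_lim (fun t => f t y) x (fx x y)) /\
    (forall y, Rabs (y - y0) < d -> derivable_pt_lim (fun t => f x0 t) y (fy y)) /\
    fx x0 y0 = 0 /\ fy y0 = 0 /\
    derivable_pt_lim (fun t => fx t y0) x0 hxx /\
    derivable_pt_lim (fun t => fx x0 t) y0 hxy /\
    derivable_pt_lim fy y0 hyy /\
    (forall v1 v2, (v1 <> 0 \/ v2 <> 0) ->
       0 < hxx * v1 ^ 2 + 2 * hxy * v1 * v2 + hyy * v2 ^ 2).

(* Main.v *)
Require Import Defs.
From Stdlib Require Import Reals Lra.
From Coquelicot Require Import Coquelicot.
Open Scope R_scope.

Lemma eps_deriv (f : R -> R) x l : derivable_pt_lim f x l ->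
  epsilon (inhabits 0) (fun l => derivable_pt_lim f x l) = l.
Proof.
  intro H. pose proof (epsilon_spec (inhabits 0) (fun l => derivable_pt_lim f x l) (ex_intro _ l H)) as H1.
  exact (uniqueness_limite _ _ _ _ H1 H).
Qed.

Lemma deriv_local f g x l d : 0 < d -> (forall t, Rabs (t - x) < d -> f t = g t) ->
  derivable_pt_lim f x l -> derivable_pt_lim g x l.
Proof.
  intros Hd Hfg H e He. destruct (H e He) as [del Hdel].
  assert (Hp : 0 < Rmin del d) by (apply Rmin_pos; [apply cond_pos|lra]).
  exists (mkposreal _ Hp). intros h hne hlt. simpl in hlt.
  rewrite <- !Hfg. apply Hdel; auto. apply Rlt_le_trans with (1 := hlt); apply Rmin_l.
  - replace (x - x) with 0 by ring. rewrite Rabs_R0. lra.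
  - replace (x + h - x) with h by ring. apply Rlt_le_trans with (1 := hlt); apply Rmin_r.
Qed.

Lemma pdx_hxy D1 D2 g x y : pdx (hxy D1 D2 g) x y = - D1 * sin x + g * D2 * sin (y - g * x).
Proof.
  unfold pdx. apply eps_deriv. apply is_derive_Reals. unfold hxy, hpot.
  auto_derive; auto. unfold Rminus; ring.
Qed.

Lemma pdy_hxy D1 D2 g x y : pdy (hxy D1 D2 g) x y = - D2 * sin (y - g * x).
Proof.
  unfold pdy. apply eps_deriv. apply is_derive_Reals. unfold hxy, hpot.
  auto_derive; auto. unfold Rminus; ring.
Qed.

Lemma ufun_eq A B D1 D2 g K x y :
  ufun A B D1 D2 g K x y = - (D1 * sin x) / (A - g * bfun B g x y) * K x y.
Proof.
  unfold ufun. rewrite pdx_hxy, pdy_hxy. unfold P1, P2. unfold Rdiv. ring.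
Qed.

Lemma mass_pos A B C psi phi : B ^ 2 < A * C -> 0 < mass A B C psi phi.
Proof.
  intro H. unfold mass. destruct (COS_bound (psi - phi)).
  assert (cos (psi - phi) ^ 2 <= 1) by nra.
  assert (0 <= B ^ 2) by nra. nra.
Qed.

Definition FHv A B C psi phi (p : vec) : vec :=
  (/ mass A B C psi phi * (C * fst p - B * cos (psi - phi) * snd p),
   / mass A B C psi phi * (- (B * cos (psi - phi)) * fst p + A * snd p)).

Definition sig A B C g psi phi : vec :=
  (A - g * (B * cos (psi - phi)), B * cos (psi - phi) - g * C).

Lemma FD_back A B C psi phi p : B ^ 2 < A * C -> FiberDeriv A B C psi phi p (FHv A B C psi phi p).
Proof.
  intros H beta. pose proof (mass_pos A B C psi phi H) as Hm.
  apply is_derive_Reals. unfold Ham. auto_derive; auto.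
  unfold pairing, FHv; simpl. field. lra.
Qed.

Lemma FD_fwd A B C psi phi p v : B ^ 2 < A * C -> FiberDeriv A B C psi phi p v -> v = FHv A B C psi phi p.
Proof.
  intros H H1. pose proof (FD_back A B C psi phi p H) as H2.
  pose proof (uniqueness_limite _ _ _ _ (H1 (1,0)) (H2 (1,0))) as E1.
  pose proof (uniqueness_limite _ _ _ _ (H1 (0,1)) (H2 (0,1))) as E2.
  unfold pairing in *; simpl in *. destruct v as [v1 v2].
  unfold FHv. ring_simplify in E1. ring_simplify in E2. simpl in E1, E2. f_equal; [rewrite E1|rewrite E2]; ring.
Qed.

Lemma FHv_sig A B C g psi phi k : B ^ 2 < A * C ->
  FHv A B C psi phi (vscale k (sig A B C g psi phi)) = vscale k (ddx_vec g).
Proof.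
  intro H. pose proof (mass_pos A B C psi phi H) as Hm. unfold mass in Hm.
  unfold FHv, vscale, sig, ddx_vec, mass; simpl. f_equal; field; lra.
Qed.

Lemma FD_sig A B C g psi phi k : B ^ 2 < A * C ->
  FiberDeriv A B C psi phi (vscale k (sig A B C g psi phi)) (vscale k (ddx_vec g)).
Proof. intro H. rewrite <- (FHv_sig A B C g psi phi k H). apply FD_back; auto. Qed.

Lemma FD_inv A B C g psi phi k beta : B ^ 2 < A * C ->
  FiberDeriv A B C psi phi beta (vscale k (ddx_vec g)) -> beta = vscale k (sig A B C g psi phi).
Proof.
  intros H H1. apply FD_fwd in H1; auto. pose proof (mass_pos A B C psi phi H) as Hm.
  unfold FHv, vscale, ddx_vec, sig in *. destruct beta as [b1 b2]. simpl in *.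
  injection H1 as e1 e2.
  set (m := mass A B C psi phi) in *. set (c := cos (psi - phi)) in *.
  assert (E1 : b1 = (k * 1) * A + (k * - g) * (B * c)).
  { rewrite e1, e2. unfold m, mass. fold c. field. unfold m, mass in Hm. fold c in Hm. lra. }
  assert (E2 : b2 = (k * 1) * (B * c) + (k * - g) * C).
  { rewrite e1, e2. unfold m, mass. fold c. field. unfold m, mass in Hm. fold c in Hm. lra. }
  f_equal; [rewrite E1 | rewrite E2]; ring.
Qed.
Lemma cos_lip t : Rabs (1 - cos t) <= Rabs t.
Proof.
  destruct (MVT_abs cos (fun c => - sin c) 0 t) as [c [Hc _]].
  { intros c _. apply derivable_pt_lim_cos. }
  rewrite cos_0 in Hc. replace (1 - cos t) with (- (cos t - 1)) by ring.
  rewrite Rabs_Ropp, Hc, Rabs_Ropp, Rminus_0_r.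
  destruct (SIN_bound c). assert (Rabs (sin c) <= 1) by (apply Rabs_le; lra).
  pose proof (Rabs_pos t). nra.
Qed.

Lemma box_nz A B g e x y : 0 < B -> A - g * B <> 0 ->
  e = Rabs (A - g * B) / (2 * (Rabs g * B + 1) * (Rabs (1 + g) + 1)) ->
  Rabs x < e -> Rabs y < e -> A - g * (B * cos ((1 + g) * x - y)) <> 0.
Proof.
  intros HB Hq He Hx Hy.
  set (q := Rabs (A - g * B)) in *.
  assert (Hq0 : 0 < q) by (apply Rabs_pos_lt; auto).
  set (th := (1 + g) * x - y).
  pose proof (Rabs_pos g) as Hg0. pose proof (Rabs_pos (1+g)) as Hg1.
  pose proof (Rabs_pos x). pose proof (Rabs_pos y).
  assert (T1 : Rabs th <= Rabs (1+g) * Rabs x + Rabs y).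
  { unfold th. unfold Rminus. eapply Rle_trans; [apply Rabs_triang|].
    rewrite Rabs_Ropp, Rabs_mult. lra. }
  assert (T2 : Rabs th <= (Rabs (1+g) + 1) * e).
  { assert (Rabs (1+g) * Rabs x <= Rabs (1+g) * e) by (apply Rmult_le_compat_l; lra). lra. }
  assert (T3 : e * (Rabs (1+g) + 1) = q / (2 * (Rabs g * B + 1))).
  { rewrite He. field. repeat split; nra. }
  assert (T4 : Rabs g * B * Rabs th <= q * (Rabs g * B) / (2 * (Rabs g * B + 1))).
  { assert (0 <= Rabs g * B) by nra.
    apply Rle_trans with (Rabs g * B * ((Rabs (1+g) + 1) * e)). nra.
    right. replace ((Rabs (1 + g) + 1) * e) with (e * (Rabs (1+g) + 1)) by ring.
    rewrite T3. field. nra. }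
  assert (T5 : q * (Rabs g * B) / (2 * (Rabs g * B + 1)) < q / 2).
  { replace (q * (Rabs g * B) / (2 * (Rabs g * B + 1))) with (q / 2 - q / (2 * (Rabs g * B + 1))) by (field; nra).
    assert (0 < q / (2 * (Rabs g * B + 1))) by (apply Rdiv_lt_0_compat; nra). lra. }
  pose proof (cos_lip th) as Hc.
  assert (T6 : Rabs (g * B * (1 - cos th)) <= Rabs g * B * Rabs th).
  { rewrite !Rabs_mult, (Rabs_right B) by lra. apply Rmult_le_compat_l; [nra | exact Hc]. }
  intro Hz.
  assert (E : A - g * B = - (g * B * (1 - cos th))).
  { replace (A - g * B) with ((A - g * (B * cos th)) - g * B * (1 - cos th)) by ring.
    rewrite Hz. ring. }
  unfold q in *. rewrite E, Rabs_Ropp in *. lra.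
Qed.

Lemma vscale_1 v : vscale 1 v = v.
Proof. destruct v; unfold vscale; simpl; f_equal; ring. Qed.
Theorem mainTheorem10 (A B C D1 D2 gamma : R) :
  0 < A -> 0 < B -> 0 < C -> 0 < D1 -> 0 < D2 -> B ^ 2 < A * C ->
  gamma <> -1 -> gamma <> A / B ->
  exists eps : R, 0 < eps /\
    (forall x y : R, in_box eps x y ->
       IsComplement A B C gamma x (y - gamma * x) /\
       (exists s : vec, FiberDeriv A B C x (y - gamma * x) s (ddx_vec gamma)) /\
       (forall s : vec, FiberDeriv A B C x (y - gamma * x) s (ddx_vec gamma) ->
          IsProjHat A B C gamma x (y - gamma * x) dx_cov
            (vscale (/ (A - gamma * bfun B gamma x y)) s) /\
          IsProjHat A B C gamma x (y - gamma * x) (dy_cov gamma)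
            (vscale (gamma / (A - gamma * bfun B gamma x y)) s))) /\
    (forall K : R -> R -> R,
       SmoothOn eps K -> (forall x y, in_box eps x y -> 0 < K x y) ->
       (forall x y, in_box eps x y ->
          ufun A B D1 D2 gamma K x y
          = - (D1 * sin x) / (A - gamma * bfun B gamma x y) * K x y) /\
       derivable_pt_lim (fun t => ufun A B D1 D2 gamma K 0 t) 0 0 /\
       derivable_pt_lim (fun t => ufun A B D1 D2 gamma K t 0) 0
         (- D1 * K 0 0 / (A - gamma * B)) /\
       (0 < - D1 * K 0 0 / (A - gamma * B) <-> A / B < gamma) /\
       (KineticEq A B C gamma eps K ->
        forall (w : R) (hh : R -> R -> R),
          (forall x y, in_box eps x y ->
             derivable_pt_lim (fun t => hh t y) x (ufun A B D1 D2 gamma K x y)) ->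
          (forall y, Rabs y < eps -> hh 0 y = w / 2 * y ^ 2) ->
          (CritPD hh 0 0 <-> A / B < gamma /\ 0 < w))).
Proof.
  intros HA HB HC HD1 HD2 HAC Hg1 HgAB.
  set (r := A / B).
  assert (Er : A = r * B) by (unfold r; field; lra).
  assert (Hq : A - gamma * B <> 0).
  { intro Hz. apply HgAB. fold r. rewrite Er in Hz.
    assert ((r - gamma) * B = 0) by lra.
    apply Rmult_integral in H. destruct H; lra. }
  set (eps := Rabs (A - gamma * B) / (2 * (Rabs gamma * B + 1) * (Rabs (1 + gamma) + 1))).
  assert (Heps : 0 < eps).
  { unfold eps. apply Rdiv_lt_0_compat. apply Rabs_pos_lt; auto.
    pose proof (Rabs_pos gamma). pose proof (Rabs_pos (1+gamma)).
    assert (0 <= Rabs gamma * B) by nra. apply Rmult_lt_0_compat; lra. }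
  exists eps. split; [exact Heps|]. split.
  - intros x y [Hx Hy].
    assert (Ha := box_nz A B gamma eps x y HB Hq eq_refl Hx Hy).
    assert (Hc : cos (x - (y - gamma * x)) = cos ((1 + gamma) * x - y))
      by (f_equal; ring).
    assert (Hb : bfun B gamma x y = B * cos (x - (y - gamma * x)))
      by (unfold bfun; rewrite Hc; ring).
    rewrite Hb. rewrite <- Hc in Ha.
    set (c := cos (x - (y - gamma * x))) in *.
    assert (Hs : sig A B C gamma x (y - gamma * x) = (A - gamma * (B * c), B * c - gamma * C)) by reflexivity.
    assert (Hdd : ddx_vec gamma = vscale 1 (ddx_vec gamma)) by (rewrite vscale_1; auto).
    split; [split|split].
    + intro alpha. exists (vscale (fst alpha / (A - gamma * (B * c))) (sig A B C gamma x (y - gamma * x))).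
      split. exists (fst alpha / (A - gamma * (B * c))). apply FD_sig; auto.
      rewrite Hs. exists (snd alpha - fst alpha / (A - gamma * (B * c)) * (B * c - gamma * C)).
      unfold vsub, vscale; simpl. f_equal. field; auto.
    + intros beta [k Hk] [c' Hc'].
      apply FD_inv in Hk; auto. rewrite Hk, Hs in Hc'. unfold vscale in Hc'. simpl in Hc'.
      injection Hc' as e1 e2. apply Rmult_integral in e1. destruct e1 as [e1|e1]; [|contradiction].
      rewrite Hk, Hs, e1. unfold vscale; simpl. f_equal; ring.
    + exists (sig A B C gamma x (y - gamma * x)). rewrite Hdd.
      rewrite <- (vscale_1 (sig A B C gamma x (y - gamma * x))) at 1. apply FD_sig; auto.
    + intros s Hs'. rewrite Hdd in Hs'. apply FD_inv in Hs'; auto. rewrite vscale_1 in Hs'.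
      rewrite Hs'. split; split.
      * exists (/ (A - gamma * (B * c))). apply FD_sig; auto.
      * rewrite Hs. exists (0 - / (A - gamma * (B * c)) * (B * c - gamma * C)).
        unfold vsub, vscale, dx_cov; simpl. f_equal. field; auto.
      * exists (gamma / (A - gamma * (B * c))). apply FD_sig; auto.
      * rewrite Hs. exists (1 - gamma / (A - gamma * (B * c)) * (B * c - gamma * C)).
        unfold vsub, vscale, dy_cov; simpl. f_equal. field; auto.
  - intros K HS Hpos.
    assert (Hu := ufun_eq A B D1 D2 gamma K).
    assert (B00 : in_box eps 0 0) by (unfold in_box; rewrite Rabs_R0; lra).
    assert (K0 := Hpos 0 0 B00).
    destruct HS as [fxK fyK HK _ _].
    destruct (HK 0 0 B00) as [_ [HKx _]].
    set (val := - D1 * K 0 0 / (A - gamma * B)).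
    assert (D0 : derivable_pt_lim (fun t => ufun A B D1 D2 gamma K 0 t) 0 0).
    { apply deriv_local with (f := fun _ => 0) (d := 1). lra.
      intros t _. rewrite Hu, sin_0. unfold Rdiv. ring.
      apply derivable_pt_lim_const. }
    assert (Dx : derivable_pt_lim (fun t => ufun A B D1 D2 gamma K t 0) 0 val).
    { set (f1 := fun t => - (D1 * sin t) / (A - gamma * bfun B gamma t 0)).
      assert (Hf1 : derivable_pt_lim f1 0 (- D1 / (A - gamma * B))).
      { apply is_derive_Reals. unfold f1, bfun. auto_derive.
        - replace ((1 + gamma) * 0 + - 0) with 0 by ring. rewrite cos_0.
          replace (A + - (gamma * (B * 1))) with (A - gamma * B) by ring. exact Hq.
        - replace ((1 + gamma) * 0 + - 0) with 0 by ring. rewrite cos_0, sin_0.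
          replace (A + - (gamma * (B * 1))) with (A - gamma * B) by ring. field. auto. }
      pose proof (derivable_pt_lim_mult f1 (fun t => K t 0) 0 _ _ Hf1 HKx) as HM.
      apply deriv_local with (f := (f1 * (fun t => K t 0))%F) (d := 1). lra.
      intros t _. unfold mult_fct, f1. rewrite Hu. reflexivity.
      replace val with (- D1 / (A - gamma * B) * K 0 0 + f1 0 * fxK 0 0). exact HM.
      unfold f1, val, bfun. rewrite sin_0. unfold Rdiv. ring. }
    assert (Hsign : 0 < val <-> A / B < gamma).
    { fold r. unfold val. unfold Rdiv.
      assert (0 < D1 * K 0 0) by (apply Rmult_lt_0_compat; lra).
      destruct (Rlt_or_le (A - gamma * B) 0) as [Hn|Hn].
      - assert (/ (A - gamma * B) < 0) by (apply Rinv_lt_0_compat; auto).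
        assert (r < gamma) by (rewrite Er in Hn; nra). split; intro; [auto | nra].
      - assert (Hn' : 0 < A - gamma * B) by (destruct Hn; [auto | exfalso; apply Hq; auto]).
        assert (0 < / (A - gamma * B)) by (apply Rinv_0_lt_compat; auto).
        assert (gamma < r) by (rewrite Er in Hn'; nra). split; intro; nra. }
    split; [intros x y _; apply Hu|]. split; [exact D0|]. split; [exact Dx|].
    split; [exact Hsign|].
    intros _ w hh Hhx Hh0.
    assert (Hder : forall y, Rabs y < eps -> derivable_pt_lim (fun t => hh 0 t) y (w * y)).
    { intros y Hy. apply deriv_local with (f := fun t => w / 2 * t ^ 2) (d := eps - Rabs y). lra.
      intros t Ht. rewrite Hh0. auto.
      pose proof (Rabs_triang (t - y) y). replace (t - y + y) with t in H by ring. lra.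
      apply is_derive_Reals. auto_derive; auto. field. }
    assert (Hlin : derivable_pt_lim (fun y => w * y) 0 w).
    { apply is_derive_Reals. auto_derive; auto. ring. }
    split.
    + intros [d [fx [fy [hxx [hxy' [hyy [Hd [Hfx [Hfy [Hf0 [Hfy0 [Hxx [Hxy [Hyy Hpd]]]]]]]]]]]]]].
      set (rr := Rmin d eps).
      assert (Hrr : 0 < rr) by (apply Rmin_pos; lra).
      assert (Hrd : rr <= d) by apply Rmin_l. assert (Hre : rr <= eps) by apply Rmin_r.
      assert (Efy : forall y, Rabs (y - 0) < rr -> fy y = w * y).
      { intros y Hy. rewrite Rminus_0_r in Hy.
        apply (uniqueness_limite (fun t => hh 0 t) y). apply Hfy. rewrite Rminus_0_r. lra.
        apply Hder. lra. }
      assert (Ew : hyy = w).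
      { apply (uniqueness_limite (fun y => w * y) 0); [|exact Hlin].
        apply deriv_local with (f := fy) (d := rr); auto. }
      assert (Ex : hxx = val).
      { apply (uniqueness_limite (fun t => ufun A B D1 D2 gamma K t 0) 0); [|exact Dx].
        apply deriv_local with (f := fun t => fx t 0) (d := rr); auto.
        intros t Ht. rewrite Rminus_0_r in Ht.
        apply (uniqueness_limite (fun s => hh s 0) t).
        apply Hfx; rewrite Rminus_0_r; [lra | rewrite Rabs_R0; lra].
        apply Hhx. split; [lra | rewrite Rabs_R0; lra]. }
      pose proof (Hpd 1 0 (or_introl R1_neq_R0)) as P1'.
      pose proof (Hpd 0 1 (or_intror R1_neq_R0)) as P2'.
      replace (hxx * 1 ^ 2 + 2 * hxy' * 1 * 0 + hyy * 0 ^ 2) with hxx in P1' by ring.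
      replace (hxx * 0 ^ 2 + 2 * hxy' * 0 * 1 + hyy * 1 ^ 2) with hyy in P2' by ring.
      split; [apply Hsign; rewrite <- Ex; exact P1' | rewrite <- Ew; exact P2'].
    + intros [Hgam Hw]. apply Hsign in Hgam.
      exists eps, (ufun A B D1 D2 gamma K), (fun y => w * y), val, 0, w.
      repeat split.
      * exact Heps.
      * intros x y Hx Hy. apply Hhx. rewrite !Rminus_0_r in *. split; auto.
      * intros y Hy. rewrite Rminus_0_r in Hy. apply Hder; auto.
      * rewrite Hu, sin_0. unfold Rdiv. ring.
      * ring.
      * exact Dx.
      * exact D0.
      * exact Hlin.
      * intros v1 v2 Hv.
        destruct Hv as [Hv|Hv]; apply Rsqr_pos_lt in Hv; unfold Rsqr in Hv;
        assert (0 <= v1 * v1) by nra; assert (0 <= v2 * v2) by nra; simpl; nra.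
Qed.
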